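(* If the duality gap is zero and $\lambda^{\star}$ is an optimal solution of the dual problem, then an optimal solution $x^\star$ of the primal problem can be computed by solving the following linear system with respect to $x^\star$: $\begin{bmatrix}H(\lambda^{\star}) \\ b^{\top} A\end{bmatrix} x^\star = \begin{bmatrix}A^{\top} b \\ \lambda_y^\star - b^{\top} b\end{bmatrix}$.
   Context: 3D pose graph optimization with $n$ poses $(t_i,R_i)$, first pose anchored to the identity. Let $r_i\in\mathbb{R}^9$ stack the rows of $R_i$, and let $x\in\mathbb{R}^{12(n-1)}$ stack $t_2,\dots,t_n,r_2,\dots,r_n$. The primal problem is $f^\star=\min_{x,y}\|Ax-by\|^2$ subject to $x^{\top}E_{iuv}x=1$ if $u=v$, $x^{\top}E_{iuv}x=0$ if $u\neq v$ ($u,v=1,2,3$, $i=1,\dots,n-1$), and $y^2=1$, where $A,b$ encode the anchored pose-graph cost and $E_{iuv}$ satisfies $x^{\top}E_{iuv}x=(R_i^{(u)})^{\top}R_i^{(v)}$. For multipliers $\lambda=(\{\lambda_{iuv}\},\lambda_y)$, $H(\lambda)=A^{\top}A-\sum_{i=1}^{n-1}\sum_{u,v=1}^3\lambda_{iuv}E_{iuv}$ and $M(\lambda)=\begin{bmatrix}H(\lambda)&-A^{\top}b\\-b^{\top}A&b^{\top}b-\lambda_y\end{bmatrix}$. The dual problem is the SDP $d^\star=\max_\lambda\sum_{i,u}\lambda_{iuu}+\lambda_y$ subject to $M(\lambda)\succeq 0$; the duality gap is $f^\star-d^\star$. *)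

(* Defs.v *)
From HB Require Import structures.
From mathcomp Require Import all_boot all_order all_algebra.
Set Implicit Arguments. Unset Strict Implicit. Unset Printing Implicit Defensive.
Import Order.TTheory GRing.Theory Num.Theory.
Local Open Scope ring_scope.

(* Number of non-anchored poses: N = n - 1.  The variable
   x : 'cV_(12 * N) stacks t_2,...,t_n (3N entries, 0-based position 3*i + k)
   followed by r_2,...,r_n, where r_i stacks the rows of R_i:
   R_i[k][c] is stored at 0-based position 3*N + 9*i + 3*k + c  (i < N, k,c < 3). *)

Definition rpos (N i k c : nat) : nat := 3 * N + 9 * i + 3 * k + c.

(* E_{iuv}: the symmetric matrix with  x^T E_{iuv} x = (R_i^(u))^T R_i^(v)
   = sum_k R_i[k][u] * R_i[k][v]  (R^(u) = u-th column of R_i). *)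
Definition Emat {R : realFieldType} (N : nat) (i : 'I_N) (u v : 'I_3)
  : 'M[R]_(12 * N) :=
  \matrix_(a, b) (2^-1 * \sum_(k < 3)
      ((((a : nat) == rpos N i k u) && ((b : nat) == rpos N i k v))%:R
     + (((a : nat) == rpos N i k v) && ((b : nat) == rpos N i k u))%:R)).

Definition mults (R : realFieldType) (N : nat) : Type :=
  ('I_N -> 'I_3 -> 'I_3 -> R) * R.

Definition Hmat {R : realFieldType} {m N : nat} (A : 'M[R]_(m, 12 * N))
  (lam : mults R N) : 'M[R]_(12 * N) :=
  A^T *m A - \sum_(i < N) \sum_(u < 3) \sum_(v < 3) lam.1 i u v *: Emat i u v.

Definition Mmat {R : realFieldType} {m N : nat} (A : 'M[R]_(m, 12 * N))
  (b : 'cV[R]_m) (lam : mults R N) : 'M[R]_(12 * N + 1) :=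
  block_mx (Hmat A lam) (- (A^T *m b))
           (- (b^T *m A)) (b^T *m b - lam.2%:M).

Definition psd {R : realFieldType} {k : nat} (M : 'M[R]_k) : Prop :=
  forall z : 'cV[R]_k, 0 <= (z^T *m M *m z) ord0 ord0.

Definition primal_cost {R : realFieldType} {m N : nat} (A : 'M[R]_(m, 12 * N))
  (b : 'cV[R]_m) (x : 'cV[R]_(12 * N)) (y : R) : R :=
  let w := A *m x - y *: b in (w^T *m w) ord0 ord0.

Definition primal_feasible {R : realFieldType} {N : nat}
  (x : 'cV[R]_(12 * N)) (y : R) : Prop :=
  (forall (i : 'I_N) (u v : 'I_3),
      (x^T *m Emat i u v *m x) ord0 ord0 = (u == v)%:R)
  /\ y ^+ 2 = 1.

Definition primal_optimal {R : realFieldType} {m N : nat}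
  (A : 'M[R]_(m, 12 * N)) (b : 'cV[R]_m) (x : 'cV[R]_(12 * N)) (y : R) : Prop :=
  primal_feasible x y /\
  forall x' y', primal_feasible x' y' -> primal_cost A b x y <= primal_cost A b x' y'.

Definition dual_obj {R : realFieldType} {N : nat} (lam : mults R N) : R :=
  \sum_(i < N) \sum_(u < 3) lam.1 i u u + lam.2.

Definition dual_feasible {R : realFieldType} {m N : nat}
  (A : 'M[R]_(m, 12 * N)) (b : 'cV[R]_m) (lam : mults R N) : Prop :=
  psd (Mmat A b lam).

Definition dual_optimal {R : realFieldType} {m N : nat}
  (A : 'M[R]_(m, 12 * N)) (b : 'cV[R]_m) (lam : mults R N) : Prop :=
  dual_feasible A b lam /\
  forall lam', dual_feasible A b lam' -> dual_obj lam' <= dual_obj lam.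

(* Main.v *)
Require Import Defs.
From HB Require Import structures.
From mathcomp Require Import all_boot all_order all_algebra.
From mathcomp Require Import ring lra.
Import Order.TTheory GRing.Theory Num.Theory.
Local Open Scope ring_scope.

Lemma q11 {R : realFieldType} {k} (u v : 'cV[R]_k) (M : 'M[R]_k) :
  M^T = M -> (u^T *m M *m v) ord0 ord0 = (v^T *m M *m u) ord0 ord0.
Proof.
move=> sM; have -> : (u^T *m M *m v) ord0 ord0 = ((u^T *m M *m v)^T) ord0 ord0 by rewrite [RHS]mxE.
by rewrite !trmx_mul trmxK sM mulmxA.
Qed.

Lemma sq0 {R : realFieldType} {k} (w : 'cV[R]_k) :
  0 <= (w^T *m w) ord0 ord0 /\ ((w^T *m w) ord0 ord0 = 0 -> w = 0).
Proof.
rewrite mxE; split.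
  by apply: sumr_ge0 => i _; rewrite mxE -expr2 sqr_ge0.
move=> /eqP; rewrite psumr_eq0 => [/allP H|i _]; last by rewrite mxE -expr2 sqr_ge0.
apply/matrixP => i j; rewrite (ord1 j) mxE.
have := H i (mem_index_enum _); rewrite mxE -expr2 sqrf_eq0 => /eqP //.
Qed.

Lemma addE (R : realFieldType) (A B : 'M[R]_1) : (A + B) ord0 ord0 = A ord0 ord0 + B ord0 ord0.
Proof. by rewrite mxE. Qed.
Lemma sclE (R : realFieldType) a (A : 'M[R]_1) : (a *: A) ord0 ord0 = a * A ord0 ord0.
Proof. by rewrite mxE. Qed.
Lemma oppE (R : realFieldType) (A : 'M[R]_1) : (- A) ord0 ord0 = - A ord0 ord0.
Proof. by rewrite mxE. Qed.

Lemma psd_zero (R : realFieldType) k (M : 'M[R]_k) (z : 'cV[R]_k) :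
  M^T = M -> psd M -> (z^T *m M *m z) ord0 ord0 = 0 -> M *m z = 0.
Proof.
move=> sM pM z0.
set w := M *m z.
have key : forall t : R, 0 <= 2 * t * (w^T *m w) ord0 ord0 + t ^+ 2 * (w^T *m M *m w) ord0 ord0.
  move=> t; have := pM (z + t *: w).
  rewrite [(z + _)^T]linearD /= [(t *: w)^T]linearZ /= !mulmxDl !mulmxDr -!scalemxAl -!scalemxAr.
  rewrite !addE !sclE.
  rewrite z0 (q11 z w M sM) /w -[(M *m z)^T *m M *m z]mulmxA.
  move=> h; apply: le_trans h _; rewrite le_eqVlt; apply/orP; left; apply/eqP.
  ring.
have [ge0 eq0] := sq0 w.
apply: eq0.
set a := (w^T *m w) ord0 ord0 in key ge0 *.
set c := (w^T *m M *m w) ord0 ord0 in key.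
have c0 : 0 <= c by apply: pM.
have c1 : 0 < c + 1 by lra.
set d := (c + 1)^-1.
have d0 : 0 < d by rewrite invr_gt0.
have dc : d * (c + 1) = 1 by rewrite mulVf // gt_eqF.
have := key (- (a * d)).
move=> h.
have h2 : 0 <= a ^+ 2 * (d * (- 2 * (c + 1) + c) * d).
  suff -> : a ^+ 2 * (d * (- 2 * (c + 1) + c) * d) = 2 * - (a * d) * a + (- (a * d)) ^+ 2 * c by [].
  have -> : a ^+ 2 * (d * (- 2 * (c + 1) + c) * d) = -2 * a ^+ 2 * d * (d * (c + 1)) + a ^+ 2 * d ^+ 2 * c by ring.
  rewrite dc; ring.
have : a ^+ 2 * (d * (- 2 * (c + 1) + c) * d) <= 0.
  apply: mulr_ge0_le0; first exact: sqr_ge0.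
  apply: mulr_le0_ge0 (ltW d0); apply: mulr_ge0_le0 (ltW d0) _; lra.
move=> h3; have : a ^+ 2 * (d * (- 2 * (c + 1) + c) * d) = 0 by apply/eqP; rewrite eq_le h3 h2.
move/eqP; rewrite mulf_eq0 => /orP [/eqP|]; first by move/eqP; rewrite sqrf_eq0 => /eqP.
rewrite !mulf_eq0 (gt_eqF d0) /= orbF => /eqP h4; lra.
Qed.

Lemma Emat_sym (R : realFieldType) N (i : 'I_N) (u v : 'I_3) :
  (@Emat R N i u v)^T = Emat i u v.
Proof.
apply/matrixP => a c; rewrite !mxE; congr (_ * _).
apply: eq_bigr => k _; rewrite addrC; congr (_ + _); by rewrite andbC.
Qed.

Lemma Hmat_sym (R : realFieldType) m N (A : 'M[R]_(m, 12 * N)) lam :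
  (Hmat A lam)^T = Hmat A lam.
Proof.
rewrite /Hmat linearB /= trmx_mul trmxK; congr (_ - _).
rewrite linear_sum; apply: eq_bigr => i _.
rewrite linear_sum; apply: eq_bigr => u _.
rewrite linear_sum; apply: eq_bigr => v _.
by rewrite linearZ /= Emat_sym.
Qed.

Lemma Mmat_sym (R : realFieldType) m N (A : 'M[R]_(m, 12 * N)) b lam :
  (Mmat A b lam)^T = Mmat A b lam.
Proof.
rewrite /Mmat tr_block_mx Hmat_sym !linearN /= !trmx_mul !trmxK.
by rewrite linearB /= trmx_mul trmxK tr_scalar_mx.
Qed.

Lemma tr11 (R : realFieldType) (P : 'M[R]_1) : P^T ord0 ord0 = P ord0 ord0.
Proof. by rewrite mxE. Qed.

Theorem proposition4 (R : realFieldType) (n m : nat)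
  (A : 'M[R]_(m, 12 * n.-1)) (b : 'cV[R]_m)
  (lam : mults R n.-1) (x : 'cV[R]_(12 * n.-1)) :
  dual_optimal A b lam ->
  primal_optimal A b x 1 ->
  (* zero duality gap: f* = d* *)
  primal_cost A b x 1 = dual_obj lam ->
  col_mx (Hmat A lam) (b^T *m A) *m x
    = col_mx (A^T *m b) (b^T *m b - lam.2%:M).
Proof.
move=> [dfe _] [[pfe _] _] gap.
set z : 'cV[R]_(12 * n.-1 + 1) := col_mx x 1%:M.
have Mz : Mmat A b lam *m z =
  col_mx (Hmat A lam *m x - A^T *m b) (- (b^T *m A *m x) + (b^T *m b - lam.2%:M)).
  by rewrite /Mmat /z mul_block_col !mulmx1 !mulNmx.
have hz : (z^T *m Mmat A b lam *m z) ord0 ord0 = 0.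
  rewrite -mulmxA Mz /z tr_col_mx trmx1 mul_row_col mul1mx.
  move: gap; rewrite /primal_cost /dual_obj scale1r.
  rewrite [(A *m x - b)^T]linearB /= mulmxDl mulmxDr mulmxDr !mulNmx !mulmxN.
  rewrite /Hmat mulmxDl mulNmx !mulmxDr !mulmxN.
  rewrite !addE !oppE [(lam.2)%:M _ _]mxE !trmx_mul !mulmxA.
  have -> : (x^T *m A^T *m b) ord0 ord0 = (b^T *m A *m x) ord0 ord0.
    by rewrite -tr11 !trmx_mul !trmxK mulmxA.
  have -> : (x^T *m (\sum_(i < n.-1) \sum_(u < 3) \sum_(v < 3) lam.1 i u v *: Emat i u v) *m x) ord0 ord0
     = \sum_(i < n.-1) \sum_(u < 3) lam.1 i u u.
    rewrite mulmx_sumr mulmx_suml summxE; apply: eq_bigr => i _.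
    rewrite mulmx_sumr mulmx_suml summxE; apply: eq_bigr => u _.
    rewrite mulmx_sumr mulmx_suml summxE.
    rewrite (bigD1 u) //= -scalemxAr -scalemxAl sclE pfe eqxx mulr1 big1 ?addr0 // => v /negbTE.
    by rewrite -scalemxAr -scalemxAl sclE pfe eq_sym => ->; rewrite mulr0.
  move=> g; rewrite eqxx mulr1n; lra.
have := @psd_zero _ _ _ _ (@Mmat_sym _ _ _ A b lam) dfe hz.
rewrite Mz => /eqP; rewrite col_mx_eq0 => /andP [/eqP h1 /eqP h2].
rewrite mul_col_mx; congr col_mx.
  by apply/eqP; rewrite -subr_eq0 h1.
by move/eqP: h2; rewrite addrC subr_eq0 => /eqP ->.
Qed.
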